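(* Let $\Pi$ be a random permutation with values in $S_n$. Then $\Pi$ is $L$-decomposable if and only if, for every consecutive partition $\underline{\kappa}=(\underline{\kappa}_1,\ldots,\underline{\kappa}_{j+1})$ of $\{1,\ldots,n\}$, the ordered marginals $\Pi_{\underline{\kappa}_1},\ldots,\Pi_{\underline{\kappa}_{j+1}}$ are conditionally independent given the vector of unordered marginals $\{\Pi_{\underline{\kappa}}\}$; that is, for every $\pi\in S_n$ with $P(\{\Pi_{\underline{\kappa}}\}=\{\pi_{\underline{\kappa}}\})>0$, \[ P(\Pi=\pi \mid \{\Pi_{\underline{\kappa}}\}=\{\pi_{\underline{\kappa}}\})=\prod_{i=1}^{j+1} P(\Pi_{\underline{\kappa}_i}=\pi_{\underline{\kappa}_i}\mid \{\Pi_{\underline{\kappa}}\}=\{\pi_{\underline{\kappa}}\}). \]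
   Context: $S_n$ is the group of permutations of $\{1,\ldots,n\}$; $\Pi$ is a random element of $S_n$ with distribution $p(\pi)=P(\Pi=\pi)$. For a vector $v$ and $i\le j$, write $v\{i:j\}=\{v(i),\ldots,v(j)\}$ (unordered set; empty if $j<i$) and $v(i:j)=(v(i),\ldots,v(j))$ (ordered tuple). $\Pi$ (or $p$) is called $L$-decomposable if for every $2\le k\le n-2$ and every $\pi\in S_n$, $P(\Pi(k+1)=\pi(k+1)\mid \Pi(1:k)=\pi(1:k)) = P(\Pi(k+1)=\pi(k+1)\mid \Pi\{1:k\}=\pi\{1:k\})$ whenever the left-hand side is defined (equivalently, the random sets $\Pi\{1:k\}$, $k=1,\dots,n$, form a Markov chain). A consecutive partition is determined by sections $0=\kappa_0<\kappa_1<\cdots<\kappa_j<\kappa_{j+1}=n$ via $\underline{\kappa}_i=\{\kappa_{i-1}+1,\ldots,\kappa_i\}$. For $\pi\in S_n$, the ordered marginal is $\pi_{\underline{\kappa}_i}=\pi(\kappa_{i-1}+1:\kappa_i)$, the unordered marginal is $\{\pi_{\underline{\kappa}_i}\}=\pi\{\kappa_{i-1}+1:\kappa_i\}$, and $\{\pi_{\underline{\kappa}}\}=(\{\pi_{\underline{\kappa}_1}\},\ldots,\{\pi_{\underline{\kappa}_{j+1}}\})$. *)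

(* Defs.v *)
From HB Require Import structures.
From mathcomp Require Import all_boot all_order all_algebra all_fingroup.
Set Implicit Arguments. Unset Strict Implicit. Unset Printing Implicit Defensive.
Import Order.TTheory GRing.Theory Num.Theory.
Local Open Scope ring_scope.

(* Positions are 0-based: paper position i (1 <= i <= n) is ordinal i-1. *)
Section Defs.
Variables (R : realFieldType) (n : nat).

Definition is_dist (p : 'S_n -> R) : Prop :=
  (forall s, 0 <= p s) /\ \sum_(s : 'S_n) p s = 1.

Definition Pr (p : 'S_n -> R) (A : pred 'S_n) : R := \sum_(s : 'S_n | A s) p s.

Definition condP (p : 'S_n -> R) (A B : pred 'S_n) : R :=
  Pr p [pred s : 'S_n | A s && B s] / Pr p B.

(* ordered marginal on 0-based positions a <= i < b : (s(a+1), ..., s(b)) in paper *)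
Definition seg_tuple (s : 'S_n) (a b : nat) : seq 'I_n :=
  [seq s i | i : 'I_n <- [seq i : 'I_n <- enum 'I_n | ((a <= i) && (i < b))%N]].

Definition seg_set (s : 'S_n) (a b : nat) : {set 'I_n} :=
  [set s i | i : 'I_n & (a <= i < b)%N].

(* L-decomposability: for 2 <= k <= n-2 (paper indexing), position k+1 of the
   paper is ordinal k; prefix Pi(1:k) is the 0-based segment [0,k). *)
Definition L_decomposable (p : 'S_n -> R) : Prop :=
  forall (k : nat), (2 <= k)%N -> (k <= n - 2)%N ->
  forall (pi : 'S_n) (i : 'I_n), nat_of_ord i = k ->
  0 < Pr p [pred s : 'S_n | seg_tuple s 0 k == seg_tuple pi 0 k] ->
  condP p [pred s : 'S_n | s i == pi i] [pred s : 'S_n | seg_tuple s 0 k == seg_tuple pi 0 k]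
  = condP p [pred s : 'S_n | s i == pi i] [pred s : 'S_n | seg_set s 0 k == seg_set pi 0 k].

(* A consecutive partition is given by the interior sections
   cs = [:: kappa_1; ...; kappa_j] with 0 < kappa_1 < ... < kappa_j < n. *)
Definition consecutive_sections (cs : seq nat) : Prop := path ltn 0%N (rcons cs n).

(* blocks (kappa_{i-1}, kappa_i), i = 1..j+1, as pairs of 0-based half-open bounds *)
Definition blocks (cs : seq nat) : seq (nat * nat) :=
  let c := 0%N :: rcons cs n in zip c (behead c).

Definition unord_eq (cs : seq nat) (pi : 'S_n) : pred 'S_n :=
  [pred s : 'S_n | [seq seg_set s ab.1 ab.2 | ab <- blocks cs]
            == [seq seg_set pi ab.1 ab.2 | ab <- blocks cs]].

Definition ord_eq (ab : nat * nat) (pi : 'S_n) : pred 'S_n :=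
  [pred s : 'S_n | seg_tuple s ab.1 ab.2 == seg_tuple pi ab.1 ab.2].

End Defs.

(* Main.v *)
Require Import Defs.
From HB Require Import structures.
From mathcomp Require Import all_boot all_order all_algebra all_fingroup.
Set Implicit Arguments. Unset Strict Implicit. Unset Printing Implicit Defensive.
Import Order.TTheory GRing.Theory Num.Theory.
Local Open Scope ring_scope.


Definition agree {n} (s t : 'S_n) (a b : nat) : bool :=
  [forall i : 'I_n, ((a <= i < b)%N) ==> (s i == t i)].

Lemma agreeC n (s t : 'S_n) a b : agree s t a b = agree t s a b.
Proof. by apply/forallP/forallP => H i; rewrite eq_sym; apply: H. Qed.

Lemma agree_refl n (s : 'S_n) a b : agree s s a b.
Proof. by apply/forallP => i; rewrite eqxx implybT. Qed.

Lemma agree_trans n (s t u : 'S_n) a b : agree s t a b -> agree t u a b -> agree s u a b.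
Proof.
move=> /forallP H1 /forallP H2; apply/forallP => i; apply/implyP => Hi.
by rewrite (eqP (implyP (H1 i) Hi)) (implyP (H2 i) Hi).
Qed.

Lemma agree_split n (s t : 'S_n) a b c : (a <= b <= c)%N ->
  agree s t a c = agree s t a b && agree s t b c.
Proof.
move=> /andP[hab hbc]; apply/forallP/andP => [H|[/forallP H1 /forallP H2] i].
  split; apply/forallP => i; apply/implyP => /andP[h1 h2]; apply: (implyP (H i)).
    by rewrite h1 (leq_trans h2 hbc).
  by rewrite h2 (leq_trans hab h1).
apply/implyP => /andP[h1 h2]; case: (ltnP i b) => hib.
  by apply: (implyP (H1 i)); rewrite h1 hib.
by apply: (implyP (H2 i)); rewrite hib h2.
Qed.

Lemma agree_sub n (s t : 'S_n) a b a' b' : (a <= a')%N -> (b' <= b)%N ->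
  agree s t a b -> agree s t a' b'.
Proof.
move=> h1 h2 /forallP H; apply/forallP => i; apply/implyP => /andP[i1 i2].
by apply: (implyP (H i)); rewrite (leq_trans h1 i1) (leq_trans i2 h2).
Qed.

Lemma agree_all n (s t : 'S_n) : agree s t 0 n = (s == t).
Proof.
apply/forallP/eqP => [H|->]; last by move=> i; rewrite eqxx implybT.
by apply/permP => i; apply/eqP; apply: (implyP (H i)); rewrite /= ltn_ord.
Qed.

Lemma seg_tupleE n (s t : 'S_n) a b :
  (seg_tuple s a b == seg_tuple t a b) = agree s t a b.
Proof.
rewrite /seg_tuple; apply/eqP/forallP => [H i|H].
  apply/implyP => hi; apply/eqP; move/eq_in_map: H; apply.
  by rewrite mem_filter hi mem_enum.
apply/eq_in_map => i; rewrite mem_filter => /andP[hi _]; exact/eqP/(implyP (H i)).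
Qed.

Lemma mem_seg_set n (s : 'S_n) a b i : (s i \in seg_set s a b) = (a <= i < b)%N.
Proof. by rewrite /seg_set mem_imset ?inE //; apply: perm_inj. Qed.

Lemma seg_set_agree n (s t : 'S_n) a b : agree s t a b -> seg_set s a b = seg_set t a b.
Proof.
move=> /forallP H; apply: eq_in_imset => i; rewrite inE => hi.
exact/eqP/(implyP (H i)).
Qed.

Lemma seg_set_split n (s : 'S_n) a b c : (a <= b <= c)%N ->
  seg_set s a c = seg_set s a b :|: seg_set s b c.
Proof.
move=> /andP[hab hbc]; apply/setP => x; rewrite -(permKV s x) inE !mem_seg_set.
set i := (s^-1)%g x; case: (ltnP i b) => hib /=.
  by rewrite (leq_trans hib hbc) /=; case: (a <= i)%N.
by rewrite andbF /= (leq_trans hab hib).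
Qed.

Lemma seg_set_disj n (s : 'S_n) a b c d : (b <= c)%N ->
  [disjoint seg_set s a b & seg_set s c d].
Proof.
move=> hbc; rewrite -setI_eq0; apply/eqP/setP => x; rewrite -(permKV s x) !inE !mem_seg_set.
set i := (s^-1)%g x; case: (ltnP i b) => hib; rewrite ?andbF // andbT /=.
by rewrite [(c <= i)%N]leqNgt (leq_trans hib hbc) andbF.
Qed.

Lemma seg_set_compl n (s : 'S_n) k : seg_set s k n = ~: seg_set s 0 k.
Proof.
apply/setP => x; rewrite -(permKV s x) !inE !mem_seg_set /=.
by rewrite ltn_ord andbT -leqNgt.
Qed.


Lemma agree_cat n (s t : 'S_n) k : agree s t 0 k -> agree s t k n -> s = t.
Proof.
move=> /forallP H1 /forallP H2; apply/permP => i; apply/eqP.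
case: (ltnP i k) => hi; first by apply: (implyP (H1 i)).
by apply: (implyP (H2 i)); rewrite hi ltn_ord.
Qed.

Lemma seg_set_suf n (s t : 'S_n) k : agree s t k n -> seg_set s 0 k = seg_set t 0 k.
Proof.
move=> H; apply: (@inv_inj _ (@setC _)); first exact: setCK.
by rewrite -!seg_set_compl; apply: seg_set_agree.
Qed.

Lemma splice_ex n (u v : 'S_n) k : seg_set u 0 k = seg_set v 0 k ->
  exists s : 'S_n, agree s u 0 k && agree s v k n.
Proof.
move=> Huv.
pose f := fun i : 'I_n => if (i < k)%N then u i else v i.
have finj : injective f.
  move=> i j; rewrite /f.
  have cross : forall i j : 'I_n, (i < k)%N -> (k <= j)%N -> u i != v j.
    move=> i' j' hi hj; apply/eqP => E.
    have : u i' \in seg_set u 0 k by rewrite mem_seg_set.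
    by rewrite Huv E mem_seg_set /= ltnNge hj.
  case: (ltnP i k) => hi; case: (ltnP j k) => hj.
  - exact: perm_inj.
  - by move=> E; move: (cross _ _ hi hj); rewrite E eqxx.
  - by move=> E; move: (cross _ _ hj hi); rewrite E eqxx.
  - exact: perm_inj.
exists (perm finj); apply/andP; split; apply/forallP => i; apply/implyP => /andP[h1 h2];
  rewrite permE /f.
  by rewrite h2.
by rewrite ltnNge h1.
Qed.

Definition pre_inv n (k : nat) (E : pred 'S_n) := forall s t, agree s t 0 k -> E s = E t.
Definition suf_inv n (k : nat) (E : pred 'S_n) := forall s t, agree s t k n -> E s = E t.

Definition Hk (R : realFieldType) n (p : 'S_n -> R) k := forall pi : 'S_n,
  p pi * Pr p (fun s => seg_set s 0 k == seg_set pi 0 k)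
  = Pr p (fun s => agree s pi 0 k) * Pr p (fun s => agree s pi k n).

Lemma inner_count (R : realFieldType) n k (X : {set 'I_n}) (E F : pred 'S_n) (g : R) (u v : 'S_n) :
  pre_inv k E -> suf_inv k F ->
  \sum_(s : 'S_n) (if [&& [&& (seg_set s 0 k == X), E s & F s], agree u s 0 k & agree v s k n] then g else 0)
  = if [&& seg_set u 0 k == X, E u, seg_set v 0 k == X & F v] then g else 0.
Proof.
move=> hE hF.
case H: [&& seg_set u 0 k == X, E u, seg_set v 0 k == X & F v].
  case/and4P: H => /eqP hu hEu /eqP hv hFv.
  have [s0 /andP[h1 h2]] := splice_ex (etrans hu (esym hv)).
  rewrite (bigD1 s0) //= big1 ?addr0.
    rewrite (seg_set_agree h1) hu eqxx (hE _ _ h1) hEu (hF _ _ h2) hFv.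
    by rewrite agreeC h1 agreeC h2.
  move=> s hs; case: ifP => // /and3P[_ a1 a2].
  have e : s = s0.
    apply: (agree_cat (k:=k)).
      by apply: (agree_trans (t:=u)); rewrite agreeC.
    by apply: (agree_trans (t:=v)); rewrite agreeC.
  by rewrite e eqxx in hs.
rewrite big1 // => s _; case: ifP => // /and3P[/and3P[/eqP hs hEs hFs] a1 a2].
move: H; rewrite (seg_set_agree a1) (hE _ _ a1) (seg_set_suf a2) (hF _ _ a2).
by rewrite hs eqxx hEs hFs.
Qed.

Lemma triple_sum (R : realFieldType) n (P : pred 'S_n) (Q W : 'S_n -> 'S_n -> bool) (g : 'S_n -> 'S_n -> R) :
  \sum_(s | P s) \sum_(u | Q u s) \sum_(v | W v s) g u v
  = \sum_u \sum_v \sum_s (if [&& P s, Q u s & W v s] then g u v else 0).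
Proof.
transitivity (\sum_s \sum_u \sum_v (if [&& P s, Q u s & W v s] then g u v else 0)).
  rewrite big_mkcond; apply: eq_bigr => s _; case: (P s) => /=; last first.
    by rewrite big1 // => u _; rewrite big1.
  rewrite big_mkcond; apply: eq_bigr => u _; case: (Q u s) => /=; last first.
    by rewrite big1.
  by rewrite big_mkcond.
rewrite exchange_big; apply: eq_bigr => u _; exact: exchange_big.
Qed.

Lemma split_lemma (R : realFieldType) n (p : 'S_n -> R) k (X : {set 'I_n}) (E F : pred 'S_n) :
  Hk p k -> pre_inv k E -> suf_inv k F ->
  Pr p (fun s => [&& seg_set s 0 k == X, E s & F s]) * Pr p (fun s => seg_set s 0 k == X)
  = Pr p (fun s => (seg_set s 0 k == X) && E s) * Pr p (fun s => (seg_set s 0 k == X) && F s).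
Proof.
move=> hH hE hF; rewrite /Pr mulr_suml.
under eq_bigr => s /and3P[/eqP hs _ _].
  rewrite (_ : \sum_(i | seg_set i 0 k == X) p i = Pr p (fun t => seg_set t 0 k == seg_set s 0 k));
    last by rewrite /Pr hs.
  rewrite hH /Pr big_distrlr /=.
over.
rewrite /= triple_sum big_distrlr /= [RHS]big_mkcond; apply: eq_bigr => u _.
case: ifP => hu /=; last first.
  rewrite big1 // => v _; rewrite inner_count //.
  by case/nandP: (negbT hu) => /negbTE ->; rewrite ?andbF.
rewrite [RHS]big_mkcond /=; apply: eq_bigr => v _.
by rewrite inner_count //; case/andP: hu => -> ->.
Qed.


Definition nonneg (R : realFieldType) n (p : 'S_n -> R) := forall s, 0 <= p s.

Lemma Pr_ext (R : realFieldType) n (p : 'S_n -> R) (A B : pred 'S_n) :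
  (forall s, A s = B s) -> Pr p A = Pr p B.
Proof. by move=> h; apply: eq_bigl. Qed.

Lemma Pr_ge0 (R : realFieldType) n (p : 'S_n -> R) A : nonneg p -> 0 <= Pr p A.
Proof. by move=> h; apply: sumr_ge0. Qed.

Lemma Pr_le (R : realFieldType) n (p : 'S_n -> R) (A B : pred 'S_n) : nonneg p ->
  (forall s, A s -> B s) -> Pr p A <= Pr p B.
Proof.
move=> hp hAB; rewrite /Pr [X in X <= _]big_mkcond [X in _ <= X]big_mkcond.
apply: ler_sum => s _; case: ifP => hA; first by rewrite (hAB _ hA).
by case: ifP.
Qed.

Lemma Pr1 (R : realFieldType) n (p : 'S_n -> R) pi : Pr p (pred1 pi) = p pi.
Proof. by rewrite /Pr big_pred1_eq. Qed.

Lemma p_le_Pr (R : realFieldType) n (p : 'S_n -> R) (A : pred 'S_n) pi : nonneg p ->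
  A pi -> p pi <= Pr p A.
Proof. by move=> hp hA; rewrite -Pr1; apply: Pr_le => // s /eqP ->. Qed.

Definition restr (R : realFieldType) n (p : 'S_n -> R) (G : pred 'S_n) :=
  fun s => if G s then p s else 0.

Lemma Pr_restr (R : realFieldType) n (p : 'S_n -> R) G A :
  Pr (restr p G) A = Pr p (fun s => G s && A s).
Proof.
rewrite /Pr /restr [RHS]big_mkcond [LHS]big_mkcond; apply: eq_bigr => s _.
by case: (G s); case: (A s).
Qed.

Lemma restr_ge0 (R : realFieldType) n (p : 'S_n -> R) G : nonneg p -> nonneg (restr p G).
Proof. by move=> h s; rewrite /restr; case: ifP. Qed.

Lemma cancel_b (R : realFieldType) (b x y : R) : b * x = b * y -> (b = 0 -> x = y) -> x = y.
Proof.
move=> h h0; have [hb|nz] := eqVneq b 0; first exact: h0 hb.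
exact: (mulfI nz h).
Qed.

Lemma alg1 (R : comNzRingType) (b p g a h c : R) : h*b = g*c -> p*b = a*c -> b*(p*g) = b*(a*h).
Proof.
move=> h1 h2; rewrite mulrA (mulrC b p) h2 [RHS]mulrCA (mulrC b h) h1.
by rewrite -mulrA (mulrC c g).
Qed.

Lemma alg2 (R : comNzRingType) (b p g a' a c : R) : a'*b = a*g -> p*b = a*c -> b*(p*g) = b*(a'*c).
Proof.
move=> h1 h2; rewrite mulrA (mulrC b p) h2 [RHS]mulrA (mulrC b a') h1.
by rewrite -!mulrA (mulrC c g).
Qed.

Lemma Hk_restr (R : realFieldType) n (p : 'S_n -> R) k (G : pred 'S_n) :
  nonneg p -> Hk p k -> pre_inv k G \/ suf_inv k G -> Hk (restr p G) k.
Proof.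
move=> hp hH hG pi; rewrite !Pr_restr.
set X := seg_set pi 0 k.
have hb0 : Pr p (fun s => seg_set s 0 k == X) = 0 ->
   p pi = 0 /\ Pr p (fun s => agree s pi 0 k) = 0 /\ Pr p (fun s => agree s pi k n) = 0.
  move=> h0; split; last split; apply/eqP; rewrite eq_le ?Pr_ge0 ?hp ?andbT // -h0.
  - by apply: p_le_Pr => //=; rewrite eqxx.
  - by apply: Pr_le => // s hs; rewrite /X (seg_set_agree hs).
  - by apply: Pr_le => // s hs; rewrite /X (seg_set_suf hs).
have hpre : pre_inv k (fun s => agree s pi 0 k).
  move=> s t hst; apply/idP/idP => h; last exact: agree_trans hst h.
  by apply: (agree_trans _ h); rewrite agreeC.
have hsuf : suf_inv k (fun s => agree s pi k n).
  move=> s t hst; apply/idP/idP => h; last exact: agree_trans hst h.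
  by apply: (agree_trans _ h); rewrite agreeC.
have hHpi := hH pi.
set b := Pr p (fun s => seg_set s 0 k == X).
set a := Pr p (fun s => agree s pi 0 k).
set c := Pr p (fun s => agree s pi k n).
have preT : forall s, agree s pi 0 k -> seg_set s 0 k == X.
  by move=> s h; rewrite /X (seg_set_agree h).
have sufT : forall s, agree s pi k n -> seg_set s 0 k == X.
  by move=> s h; rewrite /X (seg_set_suf h).
have Pr0 : forall A : pred 'S_n, (forall s, A s = false) -> Pr p A = 0.
  by move=> A hA; rewrite /Pr big_pred0.
case: hG => hG.
- have hs := split_lemma X hH hG hsuf.
  rewrite (Pr_ext _ (B := fun s => G s && agree s pi k n)) in hs; last first.
    by move=> s; case h: (agree s pi k n); rewrite ?andbF // sufT.
  rewrite (Pr_ext _ (A := fun s => (seg_set s 0 k == X) && agree s pi k n) (B := fun s => agree s pi k n)) in hs; last first.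
    by move=> s; case h: (agree s pi k n); rewrite ?andbF // sufT.
  rewrite (Pr_ext _ (A := fun s => (seg_set s 0 k == X) && G s) (B := fun s => G s && (seg_set s 0 k == X))) in hs; last first.
    by move=> s; rewrite andbC.
  rewrite /restr; case hGpi: (G pi); last first.
    rewrite (Pr0 (fun s => G s && agree s pi 0 k)) ?mul0r // => s; case h: (agree s pi 0 k); rewrite ?andbF //.
    by rewrite (hG _ _ h) hGpi.
  rewrite (Pr_ext _ (A := fun s => G s && agree s pi 0 k) (B := fun s => agree s pi 0 k)); last first.
    by move=> s; case h: (agree s pi 0 k); rewrite ?andbF // (hG _ _ h) hGpi.
  apply: (cancel_b (b := b)).
    by apply: alg1 hs _; rewrite -/X in hHpi.
  by move=> hb; have [-> [-> _]] := hb0 hb; rewrite !mul0r.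
- have hs := split_lemma X hH hpre hG.
  rewrite (Pr_ext _ (B := fun s => agree s pi 0 k && G s)) in hs; last first.
    by move=> s; case h: (agree s pi 0 k); rewrite ?andbF // preT.
  rewrite (Pr_ext _ (A := fun s => (seg_set s 0 k == X) && agree s pi 0 k) (B := fun s => agree s pi 0 k)) in hs; last first.
    by move=> s; case h: (agree s pi 0 k); rewrite ?andbF // preT.
  rewrite (Pr_ext _ (A := fun s => (seg_set s 0 k == X) && G s) (B := fun s => G s && (seg_set s 0 k == X))) in hs; last first.
    by move=> s; rewrite andbC.
  rewrite (Pr_ext _ (A := fun s => agree s pi 0 k && G s) (B := fun s => G s && agree s pi 0 k)) in hs; last first.
    by move=> s; rewrite andbC.
  rewrite /restr; case hGpi: (G pi); last first.
    rewrite (Pr0 (fun s => G s && agree s pi k n)) ?mulr0 ?mul0r // => s.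
    case h: (agree s pi k n); rewrite ?andbF //.
    by rewrite (hG _ _ h) hGpi.
  rewrite (Pr_ext _ (A := fun s => G s && agree s pi k n) (B := fun s => agree s pi k n)); last first.
    by move=> s; case h: (agree s pi k n); rewrite ?andbF // (hG _ _ h) hGpi.
  apply: (cancel_b (b := b)).
    by apply: alg2 hs _; rewrite -/X in hHpi.
  by move=> hb; have [-> [_ ->]] := hb0 hb; rewrite !mul0r mulr0.
Qed.


Lemma seg_set_diff n (s : 'S_n) a b : (a <= b)%N ->
  seg_set s a b = seg_set s 0 b :\: seg_set s 0 a.
Proof.
move=> hab; rewrite (seg_set_split s (a := 0) (b := a) (c := b)) ?hab // setDUl setDv set0U.
by symmetry; apply/setDidPl; rewrite disjoint_sym; apply: seg_set_disj.
Qed.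

Lemma seg_set_low n (s : 'S_n) a b : (a <= b)%N ->
  seg_set s 0 a = seg_set s 0 b :\: seg_set s a b.
Proof.
move=> hab; rewrite (seg_set_split s (a := 0) (b := a) (c := b)) ?hab // setDUl setDv setU0.
by symmetry; apply/setDidPl; apply: seg_set_disj.
Qed.

Lemma seg_set_full n (s : 'S_n) : seg_set s 0 n = setT.
Proof. by apply/setP => x; rewrite -(permKV s x) mem_seg_set inE /= ltn_ord. Qed.

Lemma seg_set0 n (s : 'S_n) : seg_set s 0 0 = set0.
Proof. by apply/setP => x; rewrite -(permKV s x) mem_seg_set inE. Qed.

Lemma seg_eqK n (s t : 'S_n) a b : (a <= b)%N -> seg_set s 0 a = seg_set t 0 a ->
  (seg_set s a b == seg_set t a b) = (seg_set s 0 b == seg_set t 0 b).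
Proof.
move=> hab ha; apply/eqP/eqP => h.
  by rewrite (seg_set_split s (a := 0) (b := a) (c := b)) ?hab // (seg_set_split t (a := 0) (b := a) (c := b)) ?hab // ha h.
by rewrite (seg_set_diff s hab) (seg_set_diff t hab) ha h.
Qed.

Lemma seg_single n (s t : 'S_n) a :
  (seg_set s a a.+1 == seg_set t a a.+1) = agree s t a a.+1.
Proof.
apply/eqP/idP => [h|h]; last exact: seg_set_agree.
apply/forallP => i; apply/implyP => /andP[h1 h2].
have : s i \in seg_set t a a.+1 by rewrite -h mem_seg_set h1 h2.
case/imsetP => j; rewrite inE => /andP[j1 j2] ->.
have ei : val i = a by apply/eqP; rewrite eqn_leq -ltnS h2 h1.
have ej : val j = a by apply/eqP; rewrite eqn_leq -ltnS j2 j1.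
by rewrite (val_inj (etrans ei (esym ej))).
Qed.


Definition Wc n (cs : seq nat) (pi s : 'S_n) : bool :=
  all (fun c => seg_set s 0 c == seg_set pi 0 c) cs.

Lemma map_eq_all (T U : eqType) (f g : T -> U) l :
  (map f l == map g l) = all (fun x => f x == g x) l.
Proof. by elim: l => //= x l IH; rewrite eqseq_cons IH. Qed.

Lemma blocks_all n (s pi : 'S_n) l : forall a e, path ltn a (rcons l e) ->
  seg_set s 0 a = seg_set pi 0 a ->
  all (fun ab => seg_set s ab.1 ab.2 == seg_set pi ab.1 ab.2) (zip (a :: l) (rcons l e))
  = Wc l pi s && (seg_set s 0 e == seg_set pi 0 e).
Proof.
elim: l => [|c l IH] a e /=.
  by rewrite andbT => hae ha; rewrite seg_eqK ?(ltnW hae) // andbT.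
case/andP => hac hp ha; rewrite seg_eqK ?(ltnW hac) //.
by case: eqP => hc //=; rewrite IH.
Qed.

Lemma zip_trunc (l : seq nat) : forall a e,
  zip (a :: rcons l e) (rcons l e) = zip (a :: l) (rcons l e).
Proof. by elim: l => [|c l IH] a e //=; rewrite IH. Qed.

Lemma unordE n (cs : seq nat) (pi s : 'S_n) : path ltn 0%N (rcons cs n) ->
  unord_eq cs pi s = Wc cs pi s.
Proof.
move=> hp; rewrite /unord_eq /blocks inE /= zip_trunc map_eq_all.
rewrite (@blocks_all n s pi cs 0%N n hp); last by rewrite !seg_set0.
by rewrite !seg_set_full eqxx andbT.
Qed.

Lemma zip_rcons0 (l : seq nat) : forall a e,
  zip (a :: rcons l e) (rcons l e) = rcons (zip (a :: l) l) (last a l, e).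
Proof. by elim: l => [|c l IH] a e //=; rewrite IH. Qed.

Lemma path_all_le (l : seq nat) : forall a k, path ltn a (rcons l k) -> all (fun c => c < k)%N l.
Proof.
elim: l => [|c l IH] a k //= /andP[_ hp]; rewrite (IH _ _ hp) andbT.
have := order_path_min ltn_trans hp; rewrite all_rcons; by case/andP.
Qed.

Lemma prod_const (R : comNzRingType) (T : Type) (r : seq T) (x : R) : \prod_(i <- r) x = x ^+ size r.
Proof. by elim: r => [|y r IH]; rewrite ?big_nil ?big_cons ?IH ?exprS. Qed.

Definition AllH (R : realFieldType) n (p : 'S_n -> R) := forall k, (0 < k < n)%N -> Hk p k.


Lemma pre_inv_agree n (pi : 'S_n) k a b : (b <= k)%N -> pre_inv k (fun s => agree s pi a b).
Proof.
move=> hb s t hst; have h : agree s t a b by apply: agree_sub hst.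
apply/idP/idP => h'; last exact: agree_trans h h'.
by apply: (agree_trans _ h'); rewrite agreeC.
Qed.

Lemma suf_inv_agree n (pi : 'S_n) k a b : (k <= a)%N -> (b <= n)%N -> suf_inv k (fun s => agree s pi a b).
Proof.
move=> ha hb s t hst; have h : agree s t a b by apply: agree_sub hst.
apply/idP/idP => h'; last exact: agree_trans h h'.
by apply: (agree_trans _ h'); rewrite agreeC.
Qed.

Lemma pre_inv_Wc n (pi : 'S_n) k l : all (fun c => c < k)%N l -> pre_inv k (Wc l pi).
Proof.
move=> hl s t hst; apply: eq_in_all => c hc /=.
have hck : (c <= k)%N by apply: ltnW; exact: (allP hl c hc).
by rewrite (seg_set_agree (agree_sub (leqnn 0) hck hst)).
Qed.

Lemma pre_inv_and n k (E F : pred 'S_n) : pre_inv k E -> pre_inv k F -> pre_inv k (fun s => E s && F s).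
Proof. by move=> h1 h2 s t h; rewrite (h1 _ _ h) (h2 _ _ h). Qed.

Lemma alg3 (R : comNzRingType) (b M f1 c f2 U : R) : M*b = f1*c -> f2*b = U*c -> b*(M*U) = b*(f1*f2).
Proof.
move=> h1 h2; rewrite mulrA (mulrC b M) h1 [RHS]mulrCA (mulrC b f2) h2.
by rewrite -mulrA (mulrC c U) mulrCA.
Qed.

Lemma key (R : realFieldType) n (p : 'S_n -> R) (pi : 'S_n) l k :
  nonneg p -> Hk p k -> path ltn 0%N (rcons l k) -> (k <= n)%N ->
  Pr p (fun s => agree s pi (last 0%N l) n && Wc (rcons l k) pi s) * Pr p (Wc (rcons l k) pi)
  = Pr p (fun s => agree s pi (last 0%N l) k && Wc (rcons l k) pi s)
    * Pr p (fun s => agree s pi k n && Wc (rcons l k) pi s).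
Proof.
move=> hp hH hpath hkn.
have hall := path_all_le hpath.
move: hpath; rewrite rcons_path => /andP[_ hk'k].
set k' := last 0%N l in hk'k *.
set X := seg_set pi 0 k.
have WcE : forall s, Wc (rcons l k) pi s = (seg_set s 0 k == X) && Wc l pi s.
  by move=> s; rewrite /Wc all_rcons.
have agE : forall s, agree s pi k' n = agree s pi k' k && agree s pi k n.
  by move=> s; rewrite (agree_split _ _ (b := k)) // (ltnW hk'k) hkn.
have sufT : forall s, agree s pi k n -> seg_set s 0 k == X.
  by move=> s h; rewrite /X (seg_set_suf h).
have hpreE : pre_inv k (fun s => agree s pi k' k && Wc l pi s).
  by apply: pre_inv_and; [apply: pre_inv_agree | apply: pre_inv_Wc].
have hsufF : suf_inv k (fun s => agree s pi k n) by apply: suf_inv_agree.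
have S1 := split_lemma X hH hpreE hsufF.
have S2 := split_lemma X hH (pre_inv_Wc pi hall) hsufF.
set M := Pr p (fun s => agree s pi k' n && Wc (rcons l k) pi s).
set U := Pr p (Wc (rcons l k) pi).
set f1 := Pr p (fun s => agree s pi k' k && Wc (rcons l k) pi s).
set f2 := Pr p (fun s => agree s pi k n && Wc (rcons l k) pi s).
set b := Pr p (fun s => seg_set s 0 k == X).
set c := Pr p (fun s => agree s pi k n).
have eM : Pr p (fun s => [&& seg_set s 0 k == X, agree s pi k' k && Wc l pi s & agree s pi k n]) = M.
  apply: Pr_ext => s; rewrite WcE agE.
  by case: (seg_set s 0 k == X); case: (agree s pi k' k); case: (agree s pi k n); case: (Wc l pi s).
have ef1 : Pr p (fun s => (seg_set s 0 k == X) && (agree s pi k' k && Wc l pi s)) = f1.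
  apply: Pr_ext => s; rewrite WcE.
  by case: (seg_set s 0 k == X); case: (agree s pi k' k); case: (Wc l pi s).
have ec : Pr p (fun s => (seg_set s 0 k == X) && agree s pi k n) = c.
  apply: Pr_ext => s; case h: (agree s pi k n); last by rewrite andbF.
  by rewrite (sufT _ h).
have ef2 : Pr p (fun s => [&& seg_set s 0 k == X, Wc l pi s & agree s pi k n]) = f2.
  apply: Pr_ext => s; rewrite WcE.
  by case: (seg_set s 0 k == X); case: (agree s pi k n); case: (Wc l pi s).
have eU : Pr p (fun s => (seg_set s 0 k == X) && Wc l pi s) = U.
  by apply: Pr_ext => s; rewrite WcE.
rewrite eM ef1 ec -/b in S1; rewrite ef2 eU ec -/b in S2.
apply: (cancel_b (b := b)); first exact: alg3 S1 S2.
move=> hb.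
have hM : M = 0.
  apply/eqP; rewrite eq_le Pr_ge0 // andbT -hb; apply: Pr_le => // s /andP[_].
  by rewrite WcE => /andP[].
have hf1 : f1 = 0.
  apply/eqP; rewrite eq_le Pr_ge0 // andbT -hb; apply: Pr_le => // s /andP[_].
  by rewrite WcE => /andP[].
by rewrite hM hf1 !mul0r.
Qed.


Lemma blocks_rcons n (l : seq nat) : blocks n l = rcons (zip (0%N :: l) l) (last 0%N l, n).
Proof. by rewrite /blocks /= zip_rcons0. Qed.

Lemma Gfact (R : realFieldType) n (cs : seq nat) : path ltn 0%N (rcons cs n) ->
  forall (p : 'S_n -> R), nonneg p -> AllH p -> forall pi,
  p pi * Pr p (Wc cs pi) ^+ size cs
  = \prod_(ab <- blocks n cs) Pr p (fun s => agree s pi ab.1 ab.2 && Wc cs pi s).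
Proof.
elim/last_ind: cs => [|l k IH] hpath p hp hH pi.
  rewrite /blocks /= big_seq1 expr0 mulr1 -Pr1; apply: Pr_ext => s /=.
  by rewrite andbT agree_all.
move: (hpath); rewrite rcons_path last_rcons => /andP[hpk hkn].
have hpl : path ltn 0%N (rcons l n).
  move: (hpk); rewrite !rcons_path => /andP[-> h] /=; exact: ltn_trans h hkn.
have hk0 : (0 < k)%N.
  by move: hpk; rewrite rcons_path => /andP[_]; apply: leq_ltn_trans.
set T := fun s : 'S_n => seg_set s 0 k == seg_set pi 0 k.
have hp' : nonneg (restr p T) by apply: restr_ge0.
have hH' : AllH (restr p T).
  move=> k2 hk2; apply: Hk_restr => //; first exact: hH.
  case: (leqP k k2) => hkk2.
    left => s t hst; rewrite /T (seg_set_agree (agree_sub (leqnn 0) hkk2 hst)) //.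
  right => s t hst; rewrite /T (seg_set_suf (agree_sub (ltnW hkk2) (leqnn n) hst)) //.
have := IH hpl _ hp' hH' pi.
rewrite {1}/restr /T eqxx Pr_restr.
under eq_bigr do rewrite Pr_restr.
have WcE : forall s, Wc (rcons l k) pi s = T s && Wc l pi s.
  by move=> s; rewrite /Wc all_rcons.
rewrite (Pr_ext _ (B := Wc (rcons l k) pi)); last by move=> s; rewrite WcE.
set U := Pr p (Wc (rcons l k) pi).
rewrite (eq_bigr (fun ab => Pr p (fun s => agree s pi ab.1 ab.2 && Wc (rcons l k) pi s))); last first.
  move=> ab _; apply: Pr_ext => s; rewrite WcE /T.
  by case: (seg_set s 0 k == seg_set pi 0 k); case: (agree s pi ab.1 ab.2); case: (Wc l pi s).
rewrite blocks_rcons (blocks_rcons n (rcons l k)) /= zip_rcons0 last_rcons !big_rcons /=.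
rewrite size_rcons exprSr mulrA => ->.
rewrite -!mulrA; congr (_ * _).
apply: key => //; [apply: hH; exact/andP | exact: ltnW].
Qed.


Definition Markov (R : realFieldType) n (p : 'S_n -> R) k := forall pi : 'S_n,
  Pr p (fun s => agree s pi 0 k.+1) * Pr p (fun s => seg_set s 0 k == seg_set pi 0 k)
  = Pr p (fun s => agree s pi 0 k) * Pr p (fun s => (seg_set s 0 k == seg_set pi 0 k) && agree s pi k k.+1).

Lemma agree_nn n (s t : 'S_n) k : (n <= k)%N -> agree s t k n.
Proof.
move=> h; apply/forallP => i; apply/implyP => /andP[h1 h2].
by rewrite ltnNge (leq_trans h h1) in h2.
Qed.

Lemma Hn (R : realFieldType) n (p : 'S_n -> R) : Hk p n.
Proof.
move=> pi; rewrite (Pr_ext _ (A := fun s => agree s pi 0 n) (B := pred1 pi)); last first.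
  by move=> s; rewrite agree_all.
rewrite Pr1 (Pr_ext _ (A := fun s => agree s pi n n) (B := fun s => seg_set s 0 n == seg_set pi 0 n)) //.
by move=> s; rewrite agree_nn // !seg_set_full eqxx.
Qed.

Lemma alg4 (R : comNzRingType) (p b b1 a a1 c d c1 : R) :
  c*b1 = d*c1 -> p*b1 = a1*c1 -> a1*b = a*d -> b1*(p*b) = b1*(a*c).
Proof.
move=> h1 h2 h3.
have -> : b1*(p*b) = (p*b1)*b by rewrite mulrA (mulrC b1 p).
have -> : b1*(a*c) = a*(c*b1) by rewrite mulrCA (mulrC b1 c).
rewrite h1 h2 mulrAC h3; by rewrite -mulrA.
Qed.

Lemma step (R : realFieldType) n (p : 'S_n -> R) k : nonneg p -> (k < n)%N ->
  Hk p k.+1 -> Markov p k -> Hk p k.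
Proof.
move=> hp hkn hH1 hM pi.
set X := seg_set pi 0 k.+1.
have hsuf : suf_inv k.+1 (fun s => agree s pi k.+1 n) by apply: suf_inv_agree.
have hpre : pre_inv k.+1 (fun s => agree s pi k k.+1) by apply: pre_inv_agree.
have S := split_lemma X hH1 hpre hsuf.
have hsk : forall s, agree s pi k n = agree s pi k k.+1 && agree s pi k.+1 n.
  by move=> s; rewrite (agree_split _ _ (b := k.+1)) // leqnSn hkn.
have e1 : Pr p (fun s => [&& seg_set s 0 k.+1 == X, agree s pi k k.+1 & agree s pi k.+1 n])
    = Pr p (fun s => agree s pi k n).
  apply: Pr_ext => s; rewrite hsk; case h: (agree s pi k.+1 n); rewrite ?andbF //.
  by rewrite /X (seg_set_suf h) eqxx.
have e2 : Pr p (fun s => (seg_set s 0 k.+1 == X) && agree s pi k k.+1)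
    = Pr p (fun s => (seg_set s 0 k == seg_set pi 0 k) && agree s pi k k.+1).
  apply: Pr_ext => s; case h: (agree s pi k k.+1); rewrite ?andbF // !andbT.
  have hs : seg_set s k k.+1 = seg_set pi k k.+1 by apply: seg_set_agree.
  apply/eqP/eqP => E.
    by rewrite !(seg_set_low _ (leqnSn k)) E hs.
  by rewrite /X !(seg_set_split _ (a := 0) (b := k) (c := k.+1)) ?leqnSn // E hs.
have e3 : Pr p (fun s => (seg_set s 0 k.+1 == X) && agree s pi k.+1 n)
    = Pr p (fun s => agree s pi k.+1 n).
  apply: Pr_ext => s; case h: (agree s pi k.+1 n); rewrite ?andbF //.
  by rewrite /X (seg_set_suf h) eqxx.
rewrite e1 e2 e3 in S.
have hH := hH1 pi; have hMp := hM pi; rewrite -/X in hH.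
set b1 := Pr p (fun s => seg_set s 0 k.+1 == X) in S hH.
apply: (cancel_b (b := b1)); first exact: alg4 S hH hMp.
move=> hb.
have hp0 : p pi = 0.
  by apply/eqP; rewrite eq_le hp andbT -hb; apply: p_le_Pr => //=; rewrite eqxx.
have hc0 : Pr p (fun s => agree s pi k n) = 0.
  apply/eqP; rewrite eq_le Pr_ge0 // andbT -hb; apply: Pr_le => // s h.
  by rewrite /X (seg_set_suf (agree_sub (leqnSn k) (leqnn n) h)).
by rewrite hp0 hc0 mul0r mulr0.
Qed.


Lemma Tk_compl n (s t : 'S_n) k :
  (seg_set s k n == seg_set t k n) = (seg_set s 0 k == seg_set t 0 k).
Proof. by rewrite !seg_set_compl (inj_eq (can_inj (@setCK _))). Qed.

Lemma Markov1 (R : realFieldType) n (p : 'S_n -> R) : Markov p 1.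
Proof.
move=> pi.
rewrite (Pr_ext _ (A := fun s => agree s pi 0 2)
   (B := fun s => (seg_set s 0 1 == seg_set pi 0 1) && agree s pi 1 2)); last first.
  by move=> s; rewrite seg_single (agree_split _ _ (b := 1)).
rewrite (Pr_ext _ (A := fun s => agree s pi 0 1) (B := fun s => seg_set s 0 1 == seg_set pi 0 1)); last first.
  by move=> s; rewrite seg_single.
by rewrite mulrC.
Qed.

Lemma MarkovLast (R : realFieldType) k (p : 'S_k.+1 -> R) : Markov p k.
Proof.
move=> pi.
have hT : forall s : 'S_k.+1, (seg_set s 0 k == seg_set pi 0 k) -> agree s pi k k.+1.
  by move=> s h; rewrite -seg_single Tk_compl.
rewrite (Pr_ext _ (A := fun s => agree s pi 0 k.+1) (B := fun s => agree s pi 0 k)); last first.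
  move=> s; rewrite (agree_split s pi (a := 0) (b := k) (c := k.+1)) ?leqnSn //.
  case h: (agree s pi 0 k) => //=; apply: hT.
  by rewrite (seg_set_agree h).
rewrite (Pr_ext _ (A := fun s => (seg_set s 0 k == seg_set pi 0 k) && agree s pi k k.+1)
   (B := fun s => seg_set s 0 k == seg_set pi 0 k)) //.
by move=> s; case h: (seg_set s 0 k == seg_set pi 0 k) => //=; apply: hT.
Qed.

Lemma Markov_of_H (R : realFieldType) n (p : 'S_n -> R) k : (k < n)%N -> Hk p k -> Markov p k.
Proof.
move=> hkn hH pi.
set X := seg_set pi 0 k.
have hpre : pre_inv k (fun s => agree s pi 0 k) by apply: pre_inv_agree.
have hsuf : suf_inv k (fun s => agree s pi k k.+1) by apply: suf_inv_agree.
have S := split_lemma X hH hpre hsuf.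
rewrite (Pr_ext _ (A := fun s => [&& seg_set s 0 k == X, agree s pi 0 k & agree s pi k k.+1])
  (B := fun s => agree s pi 0 k.+1)) in S; last first.
  move=> s; rewrite (agree_split s pi (a := 0) (b := k) (c := k.+1)) ?leqnSn //.
  by case h: (agree s pi 0 k); rewrite ?andbF //= /X (seg_set_agree h) eqxx.
rewrite (Pr_ext _ (A := fun s => (seg_set s 0 k == X) && agree s pi 0 k)
  (B := fun s => agree s pi 0 k)) in S; last first.
  by move=> s; case h: (agree s pi 0 k); rewrite ?andbF // /X (seg_set_agree h) eqxx.
exact: S.
Qed.


Lemma agree_one n (s t : 'S_n) (i : 'I_n) : agree s t i i.+1 = (s i == t i).
Proof.
apply/forallP/idP => [H|h j]; first by apply: (implyP (H i)); rewrite leqnn ltnSn.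
apply/implyP => /andP[h1 h2].
have -> : j = i by apply: val_inj; apply/eqP; rewrite eqn_leq -ltnS h2 h1.
exact: h.
Qed.

Lemma condP_markov (R : realFieldType) n (p : 'S_n -> R) k (i : 'I_n) pi :
  nonneg p -> nat_of_ord i = k ->
  0 < Pr p [pred s : 'S_n | seg_tuple s 0 k == seg_tuple pi 0 k] ->
  (condP p [pred s : 'S_n | s i == pi i] [pred s : 'S_n | seg_tuple s 0 k == seg_tuple pi 0 k]
  = condP p [pred s : 'S_n | s i == pi i] [pred s : 'S_n | seg_set s 0 k == seg_set pi 0 k])
  <->
  (Pr p (fun s => agree s pi 0 k.+1) * Pr p (fun s => seg_set s 0 k == seg_set pi 0 k)
  = Pr p (fun s => agree s pi 0 k) * Pr p (fun s => (seg_set s 0 k == seg_set pi 0 k) && agree s pi k k.+1)).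
Proof.
move=> hp hik; rewrite /condP.
have e1 : Pr p [pred s : 'S_n | seg_tuple s 0 k == seg_tuple pi 0 k] = Pr p (fun s => agree s pi 0 k).
  by apply: Pr_ext => s; rewrite inE seg_tupleE.
have e2 : Pr p [pred s : 'S_n | [pred s : 'S_n | s i == pi i] s && [pred s : 'S_n | seg_tuple s 0 k == seg_tuple pi 0 k] s]
    = Pr p (fun s => agree s pi 0 k.+1).
  apply: Pr_ext => s; rewrite !inE seg_tupleE (agree_split s pi (a := 0) (b := k) (c := k.+1)) ?leqnSn //.
  by rewrite -hik agree_one andbC.
have e3 : Pr p [pred s : 'S_n | [pred s : 'S_n | s i == pi i] s && [pred s : 'S_n | seg_set s 0 k == seg_set pi 0 k] s]
    = Pr p (fun s => (seg_set s 0 k == seg_set pi 0 k) && agree s pi k k.+1).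
  by apply: Pr_ext => s; rewrite !inE -hik agree_one andbC.
have e4 : Pr p [pred s : 'S_n | seg_set s 0 k == seg_set pi 0 k] = Pr p (fun s => seg_set s 0 k == seg_set pi 0 k).
  by apply: Pr_ext.
rewrite e1 e2 e3 e4 => ha.
have hb : 0 < Pr p (fun s => seg_set s 0 k == seg_set pi 0 k).
  apply: (lt_le_trans ha); apply: Pr_le => // s h; by rewrite (seg_set_agree h).
split => [/eqP|h]; first by rewrite eqr_div ?lt0r_neq0 // => /eqP ->; rewrite mulrC.
by apply/eqP; rewrite eqr_div ?lt0r_neq0 // h mulrC.
Qed.


Lemma L_to_Markov (R : realFieldType) n (p : 'S_n -> R) : nonneg p -> L_decomposable p ->
  forall k, (0 < k < n)%N -> Markov p k.
Proof.
move=> hp hL k /andP[hk0 hkn].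
case: (ltnP 1 k) => hk1; last first.
  have -> : k = 1%N by apply/eqP; rewrite eqn_leq hk1 hk0.
  exact: Markov1.
case: (ltnP k.+1 n) => hkn2; last first.
  have en : n = k.+1 by apply/eqP; rewrite eqn_leq hkn2 hkn.
  subst n; exact: MarkovLast.
move=> pi.
have ha := Pr_ge0 (fun s => agree s pi 0 k) hp.
case: (eqVneq (Pr p (fun s => agree s pi 0 k)) 0) => ha0.
  have ha' : Pr p (fun s => agree s pi 0 k.+1) = 0.
    apply/eqP; rewrite eq_le Pr_ge0 // andbT -ha0; apply: Pr_le => // s h.
    exact: agree_sub h.
  by rewrite ha' ha0 !mul0r.
have hapos : 0 < Pr p (fun s => agree s pi 0 k) by rewrite lt0r ha0 ha.
pose i : 'I_n := Ordinal hkn.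
apply/(condP_markov (i := i)) => //.
  by rewrite (Pr_ext _ (B := fun s => agree s pi 0 k)) // => s; rewrite inE seg_tupleE.
apply: hL => //.
  rewrite leq_subRL; [by rewrite add2n | exact: leq_trans hk1 (ltnW hkn)].
by rewrite (Pr_ext _ (B := fun s => agree s pi 0 k)) // => s; rewrite inE seg_tupleE.
Qed.

Lemma Markov_to_L (R : realFieldType) n (p : 'S_n -> R) : nonneg p ->
  (forall k, (0 < k < n)%N -> Markov p k) -> L_decomposable p.
Proof.
move=> hp hM k hk2 hkn2 pi i hik ha.
apply/(condP_markov hp hik ha); apply: hM.
by rewrite (leq_trans _ hk2) //= -hik ltn_ord.
Qed.

Lemma AllH_of_Markov (R : realFieldType) n (p : 'S_n -> R) : nonneg p ->
  (forall k, (0 < k < n)%N -> Markov p k) -> AllH p.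
Proof.
move=> hp hM.
have H : forall j, (j < n)%N -> Hk p (n - j).
  elim => [|j IH] hj; first by rewrite subn0; apply: Hn.
  have hjn : (j < n)%N by apply: ltnW.
  apply: step => //.
  - by rewrite ltn_subrL /= (leq_ltn_trans (leq0n j) hjn).
  - by rewrite subnSK //; apply: IH.
  - by apply: hM; rewrite subn_gt0 hj ltn_subrL /= (leq_ltn_trans (leq0n j) hjn).
move=> k /andP[hk0 hkn]; rewrite -(subKn (ltnW hkn)); apply: H.
by rewrite ltn_subrL hk0 (leq_ltn_trans (leq0n k) hkn).
Qed.


Lemma AllH_to_cond (R : realFieldType) n (p : 'S_n -> R) : nonneg p -> AllH p ->
   forall cs : seq nat, consecutive_sections n cs ->
   forall pi : 'S_n, 0 < Pr p (unord_eq cs pi) ->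
   condP p (pred1 pi) (unord_eq cs pi)
   = \prod_(ab <- blocks n cs) condP p (ord_eq ab pi) (unord_eq cs pi).
Proof.
move=> hp hH cs hcs pi hU.
have eU : Pr p (unord_eq cs pi) = Pr p (Wc cs pi) by apply: Pr_ext => s; rewrite unordE.
rewrite /condP !eU; rewrite eU in hU.
have hU0 : Pr p (Wc cs pi) != 0 by rewrite lt0r_neq0.
rewrite (Pr_ext _ (B := pred1 pi)); last first.
  by move=> s; rewrite /= unordE //; case: eqP => // ->; rewrite /Wc; apply/allP => c _.
rewrite Pr1.
rewrite (eq_bigr (fun ab => Pr p (fun s => agree s pi ab.1 ab.2 && Wc cs pi s) / Pr p (Wc cs pi))); last first.
  by move=> ab _; congr (_ / _); apply: Pr_ext => s; rewrite /= unordE // /ord_eq /= seg_tupleE.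
rewrite prodf_div -(Gfact hcs hp hH) prod_const blocks_rcons size_rcons size_zip /= (minn_idPr (leqnSn _)).
by rewrite exprSr invfM mulrA -(mulrA (p pi)) mulfV ?mulr1 // expf_neq0.
Qed.

Lemma cond_to_AllH (R : realFieldType) n (p : 'S_n -> R) : nonneg p ->
   (forall cs : seq nat, consecutive_sections n cs ->
   forall pi : 'S_n, 0 < Pr p (unord_eq cs pi) ->
   condP p (pred1 pi) (unord_eq cs pi)
   = \prod_(ab <- blocks n cs) condP p (ord_eq ab pi) (unord_eq cs pi)) -> AllH p.
Proof.
move=> hp hC k /andP[hk0 hkn] pi.
have hcs : consecutive_sections n [:: k] by rewrite /consecutive_sections /= hk0 hkn.
have eU : Pr p (unord_eq [:: k] pi) = Pr p (fun s => seg_set s 0 k == seg_set pi 0 k).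
  by apply: Pr_ext => s; rewrite unordE // /Wc /= andbT.
set b := Pr p (fun s => seg_set s 0 k == seg_set pi 0 k) in eU *.
have hb := Pr_ge0 (fun s => seg_set s 0 k == seg_set pi 0 k) hp.
case: (eqVneq b 0) => hb0.
  have hp0 : p pi = 0.
    by apply/eqP; rewrite eq_le hp andbT -hb0; apply: p_le_Pr => //=; rewrite eqxx.
  have ha0 : Pr p (fun s => agree s pi 0 k) = 0.
    apply/eqP; rewrite eq_le Pr_ge0 // andbT -hb0; apply: Pr_le => // s h.
    by rewrite (seg_set_agree h).
  by rewrite hp0 ha0 !mul0r.
have hbpos : 0 < b by rewrite lt0r hb0 hb.
have := hC _ hcs pi; rewrite eU => /(_ hbpos).
rewrite /blocks /= big_cons big_cons big_nil mulr1 /condP eU.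
rewrite (Pr_ext _ (B := pred1 pi)); last first.
  by move=> s; rewrite /= unordE // /Wc /=; case: eqP => // ->; rewrite eqxx.
rewrite (Pr_ext _ (A := [pred s | ord_eq (0%N, k) pi s && unord_eq [:: k] pi s])
  (B := fun s => agree s pi 0 k)); last first.
  move=> s; rewrite /= unordE // /ord_eq /= seg_tupleE /Wc /= andbT.
  by case h: (agree s pi 0 k) => //=; rewrite (seg_set_agree h) eqxx.
rewrite (Pr_ext _ (A := [pred s | ord_eq (k, n) pi s && unord_eq [:: k] pi s])
  (B := fun s => agree s pi k n)); last first.
  move=> s; rewrite /= unordE // /ord_eq /= seg_tupleE /Wc /= andbT.
  by case h: (agree s pi k n) => //=; rewrite (seg_set_suf h) eqxx.
rewrite Pr1 mulf_div => /eqP; rewrite eqr_div ?mulf_neq0 // mulrA => /eqP h.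
exact: (mulIf hb0 h).
Qed.

Unset Implicit Arguments.

Theorem proposition2 (R : realFieldType) (n : nat) (p : 'S_n -> R) :
  is_dist p ->
  (L_decomposable p <->
   forall cs : seq nat, consecutive_sections n cs ->
   forall pi : 'S_n, 0 < Pr p (unord_eq cs pi) ->
   condP p (pred1 pi) (unord_eq cs pi)
   = \prod_(ab <- blocks n cs) condP p (ord_eq ab pi) (unord_eq cs pi)).
Proof.
move=> [hp _]; split => [hL|hC].
  apply: AllH_to_cond => //; apply: AllH_of_Markov => //; exact: L_to_Markov.
apply: Markov_to_L => // k hk; apply: Markov_of_H; first by case/andP: hk.
exact: (cond_to_AllH hp hC).
Qed.
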